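(* Let $(\mathcal{X},d)$ be a finite metric space, $P$ a probability distribution on $\mathcal{X}$, $k\ge1$ an integer, and $O\in\mathcal{X}_k$ an optimal $k$-RP solution. Then there exists a $k$-multiset $S\in\mathcal{X}_k$ all of whose points have positive probability under $P$ such that $\mathbb{E}_{X\sim P_k}[d_k(S,X)]\le 2\cdot\mathbb{E}_{X\sim P_k}[d_k(O,X)]$.
   Context: $\mathcal{X}_k$ is the set of multisets of exactly $k$ points of $\mathcal{X}$. For $U,V\in\mathcal{X}_k$, $d_k(U,V)$ is the minimum, over perfect matchings between the $k$ elements of $U$ and the $k$ elements of $V$ (with multiplicity), of the sum of the distances of matched pairs. $P_k$ is the distribution of the multiset of $k$ points drawn i.i.d. from $P$. The $k$-RP cost of $S\in\mathcal{X}_k$ is $\mathbb{E}_{X\sim P_k}[d_k(S,X)]$, and an optimal solution $O$ minimizes it over $\mathcal{X}_k$. *)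

(* Defs.v *)
From HB Require Import structures.
From mathcomp Require Import all_boot all_order all_algebra all_fingroup.
From mathcomp Require Import reals.
Set Implicit Arguments. Unset Strict Implicit. Unset Printing Implicit Defensive.
Import Order.TTheory GRing.Theory Num.Theory.
Local Open Scope ring_scope.

Definition is_metric (R : realType) (T : finType) (d : T -> T -> R) : Prop :=
  [/\ (forall x y, 0 <= d x y),
      (forall x y, d x y = 0 <-> x = y),
      (forall x y, d x y = d y x) &
      (forall x y z, d x z <= d x y + d y z)].

Definition is_prob (R : realType) (T : finType) (P : T -> R) : Prop :=
  (forall x, 0 <= P x) /\ \sum_(x : T) P x = 1.

(* A k-multiset of points of T is represented by a k-tuple (an ordering of it);
   all quantities below are invariant under reordering. *)
Definition kset (T : finType) (k : nat) := {ffun 'I_k -> T}.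

Definition match_cost (R : realType) (T : finType) (d : T -> T -> R) (k : nat)
  (U V : kset T k) (s : 'S_k) : R :=
  \sum_(i < k) d (U i) (V (s i)).

(* The fold starts from the cost of the identity matching, which is one of the
   candidates, so this is exactly the minimum. *)
Definition dk (R : realType) (T : finType) (d : T -> T -> R) (k : nat)
  (U V : kset T k) : R :=
  \big[Num.min/match_cost d U V 1%g]_(s : 'S_k) match_cost d U V s.

(* E_{X ~ P_k}[d_k(S,X)], X the multiset of k i.i.d. draws from P. *)
Definition kRP_cost (R : realType) (T : finType) (d : T -> T -> R) (P : T -> R)
  (k : nat) (S : kset T k) : R :=
  \sum_(X : kset T k) (\prod_(i < k) P (X i)) * dk d S X.

Definition kRP_optimal (R : realType) (T : finType) (d : T -> T -> R) (P : T -> R)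
  (k : nat) (O : kset T k) : Prop :=
  forall S : kset T k, kRP_cost d P O <= kRP_cost d P S.

(* Main.v *)
Require Import Defs.
From HB Require Import structures.
From mathcomp Require Import all_boot all_order all_algebra all_fingroup.
From mathcomp Require Import reals.
Import Order.TTheory GRing.Theory Num.Theory.
Local Open Scope ring_scope.

Section Aux.
Variables (R : realType) (T : finType) (d : T -> T -> R) (k : nat).

Lemma dk_le (U V : kset T k) s : dk d U V <= match_cost d U V s.
Proof. exact: bigmin_le. Qed.

Lemma dk_attained (U V : kset T k) : exists s, dk d U V = match_cost d U V s.
Proof.
rewrite /dk; apply: (big_ind (fun x => exists s, x = match_cost d U V s)).
- by exists 1%g.
- move=> x y [s1 ->] [s2 ->]; case: (leP (match_cost d U V s1) (match_cost d U V s2)) => h.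
  + by exists s1.
  + by exists s2.
- by move=> s _; exists s.
Qed.

Lemma dk_tri (O X Y : kset T k) : is_metric d ->
  dk d X Y <= dk d O X + dk d O Y.
Proof.
case=> _ _ dsym dtri.
have [s1 ->] := dk_attained O X; have [s2 ->] := dk_attained O Y.
apply: le_trans (dk_le X Y (s1^-1 * s2)%g) _.
rewrite /match_cost.
have E : \sum_(i < k) (d (O i) (X (s1 i)) + d (O i) (Y (s2 i))) = \sum_(i < k) d (O i) (X (s1 i)) + \sum_(i < k) d (O i) (Y (s2 i)).
  by rewrite big_split.
rewrite -E.
rewrite [X in X <= _](reindex_inj (@perm_inj _ s1)) /=.
apply: ler_sum => i _; rewrite permM permK.
by rewrite (dsym (O i)); apply: dtri.
Qed.

End Aux.

Theorem corollary1 (R : realType) (T : finType) (d : T -> T -> R) (P : T -> R)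
  (k : nat) (O : kset T k) :
  is_metric d -> is_prob P -> (0 < k)%N -> kRP_optimal d P O ->
  exists S : kset T k, (forall i, 0 < P (S i)) /\
    kRP_cost d P S <= 2 * kRP_cost d P O.
Proof.
move=> hm [P0 P1] _ _.
set w := fun X : kset T k => \prod_(i < k) P (X i).
have w0 : forall X, 0 <= w X by move=> X; apply: prodr_ge0.
have w1 : \sum_(X : kset T k) w X = 1.
  rewrite /w -(bigA_distr_bigA (fun (i : 'I_k) (x : T) => P x)) /=.
  by rewrite P1 big1.
set c := kRP_cost d P O.
have key : \sum_(X : kset T k) w X * kRP_cost d P X <= 2 * c.
  have -> : 2 * c = \sum_(X : kset T k) \sum_(Y : kset T k) w X * w Y * (dk d O X + dk d O Y).
    under eq_bigr => X _ do (under eq_bigr => Y _ do rewrite mulrDr; rewrite big_split).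
    rewrite big_split /=.
    have -> : \sum_(X : kset T k) \sum_(Y : kset T k) w X * w Y * dk d O X = c.
      rewrite /c /kRP_cost; apply: eq_bigr => X _.
      rewrite -big_distrl /= -big_distrr /= w1 mulr1 //.
    have -> : \sum_(X : kset T k) \sum_(Y : kset T k) w X * w Y * dk d O Y = c.
      rewrite exchange_big /c /kRP_cost; apply: eq_bigr => Y _.
      under eq_bigr => X _ do rewrite (mulrC (w X)) -mulrA.
      by rewrite -big_distrr /= -big_distrl /= w1 mul1r.
    by rewrite mulr2n mulrDl mul1r.
  apply: ler_sum => X _; rewrite /kRP_cost big_distrr /=.
  apply: ler_sum => Y _; rewrite mulrA.
  apply: ler_wpM2l; first exact: (mulr_ge0 (w0 X) (w0 Y)).
  exact: dk_tri.
case: (boolP [exists X : kset T k, (0 < w X) && (kRP_cost d P X <= 2 * c)]).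
  move=> /existsP [X /andP [wX cX]]; exists X; split => // i.
  have := wX; rewrite /w (bigD1 i) //= => h.
  rewrite lt_def P0 andbT; apply/negP => /eqP e.
  by move: h; rewrite e mul0r ltxx.
rewrite negb_exists => /forallP hall.
have [X1 wX1] : exists X, 0 < w X.
  case: (boolP [exists X, 0 < w X]) => [/existsP //|].
  rewrite negb_exists => /forallP h.
  have : \sum_(X : kset T k) w X = 0.
    apply: big1 => X _; apply/eqP; rewrite eq_le w0 andbT.
    by rewrite leNgt h.
  by rewrite w1 => /eqP; rewrite oner_eq0.
exfalso.
have : 2 * c < \sum_(X : kset T k) w X * kRP_cost d P X.
  have -> : 2 * c = (\sum_(X : kset T k) w X) * (2 * c) by rewrite w1 mul1r.
  rewrite big_distrl /=.
  rewrite (bigD1 X1) //= [X in _ < X](bigD1 X1) //=.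
  apply: ltr_leD.
    rewrite ltr_pM2l //.
    by have := hall X1; rewrite wX1 /= -ltNge.
  apply: ler_sum => X _.
  have := hall X; case: (ltrP 0 (w X)) => hw /=.
    by rewrite -ltNge => h; rewrite ler_pM2l // ltW.
  have -> : w X = 0 by apply/eqP; rewrite eq_le hw w0.
  by rewrite !mul0r.
by rewrite ltNge key.
Qed.
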